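(* Let $\min\{c^Tx : Ax=b,\ Bx\le d\}$ be a linear program over a pointed polyhedron $P=\{x\in\mathbb R^n : Ax=b,\ Bx\le d\}$, with feasible solution $x_0$. Then a steepest-descent circuit direction $g$ at $x_0$ satisfies $c^Tg/\|Bg\|_1\le c^Tu/\|Bu\|_1$ for every (nonzero) feasible direction $u$ at $x_0$.
   Context: $P$ is pointed means $\operatorname{rank}\binom{A}{B}=n$. The set of circuits $\mathcal C(A,B)$ consists of all $g\in\ker(A)\setminus\{0\}$ normalized to coprime integer components such that no $x\in\ker(A)\setminus\{0\}$ satisfies $\operatorname{supp}(Bx)\subsetneq\operatorname{supp}(Bg)$. A direction $u$ is (strictly) feasible at $x_0$ if $x_0+\alpha u\in P$ for some $\alpha>0$. A steepest-descent circuit at $x_0$ is a circuit $g\in\mathcal C(A,B)$ strictly feasible at $x_0$ that minimizes $c^Tg/\|Bg\|_1$ over all such circuits; a steepest-descent circuit direction is a positive multiple of one. *)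

(* Defs.v *)
From HB Require Import structures.
From mathcomp Require Import all_boot all_order all_algebra.
Set Implicit Arguments. Unset Strict Implicit. Unset Printing Implicit Defensive.
Import Order.TTheory GRing.Theory Num.Theory.
Local Open Scope ring_scope.

Section LP.
Variables (R : realFieldType) (mA mB n : nat).
Variables (A : 'M[rat]_(mA, n)) (B : 'M[rat]_(mB, n)).
Variables (b : 'cV[R]_mA) (d : 'cV[R]_mB) (c : 'cV[R]_n).

Definition AR : 'M[R]_(mA, n) := map_mx ratr A.
Definition BR : 'M[R]_(mB, n) := map_mx ratr B.

Definition in_P (x : 'cV[R]_n) : Prop :=
  AR *m x = b /\ forall i : 'I_mB, (BR *m x) i 0 <= d i 0.

Definition pointed : Prop := \rank (col_mx A B) = n.

Definition supp m (v : 'cV[R]_m) : {set 'I_m} := [set i | v i 0 != 0].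

Definition norm1 m (v : 'cV[R]_m) : R := \sum_i `|v i 0|.

Definition dotc (v : 'cV[R]_n) : R := \sum_i c i 0 * v i 0.

Definition obj_ratio (v : 'cV[R]_n) : R := dotc v / norm1 (BR *m v).

Definition intvR (g : 'cV[int]_n) : 'cV[R]_n := map_mx intr g.

Definition is_circuit (g : 'cV[int]_n) : Prop :=
  [/\ g != 0, AR *m intvR g = 0,
      \big[gcdz/0]_(i < n) g i 0 = 1 &
      ~ exists x : 'cV[R]_n, [/\ AR *m x = 0, x != 0 &
                               supp (BR *m x) \proper supp (BR *m intvR g)]].

Definition feasible_dir (x0 u : 'cV[R]_n) : Prop :=
  exists alpha : R, 0 < alpha /\ in_P (x0 + alpha *: u).

Definition steepest_descent_circuit (x0 : 'cV[R]_n) (g : 'cV[int]_n) : Prop :=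
  [/\ is_circuit g, feasible_dir x0 (intvR g) &
      forall h : 'cV[int]_n, is_circuit h -> feasible_dir x0 (intvR h) ->
        obj_ratio (intvR g) <= obj_ratio (intvR h)].

Definition steepest_descent_circuit_direction (x0 v : 'cV[R]_n) : Prop :=
  exists (g : 'cV[int]_n) (lam : R),
    [/\ steepest_descent_circuit x0 g, 0 < lam & v = lam *: intvR g].
End LP.

(* Main.v *)
Require Import Defs.
From HB Require Import structures.
From mathcomp Require Import all_boot all_order all_algebra.
From mathcomp Require Import ring lra.
From Stdlib Require Classical_Prop.
Set Implicit Arguments. Unset Strict Implicit. Unset Printing Implicit Defensive.
Import Order.TTheory GRing.Theory Num.Theory.
Local Open Scope ring_scope.

Lemma big_gcdz n (f : 'I_n -> int) :
  \big[gcdz/0]_i f i = (\big[gcdn/0]_i `|f i|%N)%:Z.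
Proof. by elim/big_rec2: _ => // i y1 y2 _ ->. Qed.

Lemma big_gcdn_mul n (f : 'I_n -> nat) k :
  \big[gcdn/0%N]_i (k * f i)%N = (k * \big[gcdn/0%N]_i f i)%N.
Proof.
elim/big_rec2: _ => [|i y1 y2 _ ->]; first by rewrite muln0.
by rewrite muln_gcdr.
Qed.

Lemma primitive n (w : 'cV[int]_n) : w != 0 ->
  exists h : 'cV[int]_n, exists G : int,
    [/\ 0 < G, forall i, w i 0 = G * h i 0 & \big[gcdz/0]_(i < n) h i 0 = 1].
Proof.
move=> Hw.
pose N := \big[gcdn/0%N]_i absz (w i 0).
have Hd : forall i, dvdn N (absz (w i 0)).
  move=> i; apply: (biggcdn_inf i) => //.
have HN : (0 < N)%N.
  rewrite lt0n; apply/negP => /eqP HN0; move/eqP: Hw; apply.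
  apply/matrixP => i j; rewrite ord1 mxE.
  by have := Hd i; rewrite HN0 dvd0n absz_eq0 => /eqP.
pose h := \col_i divz (w i 0) N%:Z.
have Hh : forall i, w i 0 = N%:Z * h i 0.
  move=> i; rewrite mxE mulrC divzK //.
  by rewrite dvdzE.
exists h, N%:Z; split => //.
rewrite big_gcdz; congr Posz; apply/eqP.
rewrite -(eqn_pmul2l HN) muln1 -big_gcdn_mul.
apply/eqP; rewrite /N; apply: eq_bigr => i _.
by rewrite {1}(Hh i) abszM.
Qed.

Lemma rational_kernel (R : realFieldType) m n (M : 'M[rat]_(m, n)) (x : 'cV[R]_n) :
  x != 0 -> map_mx ratr M *m x = 0 ->
  exists z : 'cV[rat]_n, z != 0 /\ M *m z = 0.
Proof.
move=> Hx HM.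
have Hnf : ~~ row_free (map_mx (ratr : rat -> R) M)^T.
  apply/negP => Hf.
  have : x^T *m (map_mx (ratr : rat -> R) M)^T = 0 *m (map_mx (ratr : rat -> R) M)^T.
    by rewrite -trmx_mul HM trmx0 mul0mx.
  move/(row_free_inj Hf)/eqP; rewrite trmx_eq0; exact/negP.
have : kermx M^T != 0.
  rewrite kermx_eq0; move: Hnf; apply: contra.
  by rewrite /row_free map_trmx mxrank_map.
move=> HK.
have [i Hi] : exists i, row i (kermx M^T) != 0.
  apply/existsP; move: HK; apply: contraR; rewrite negb_exists => /forallP H.
  apply/eqP/row_matrixP => i; rewrite row0; exact/eqP/negPn/H.
exists (row i (kermx M^T))^T; split; first by rewrite trmx_eq0.
apply/eqP; rewrite -trmx_eq0 trmx_mul trmxK -row_mul mulmx_ker row0 //.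
Qed.

Lemma int_vec (R : realFieldType) n (z : 'cV[rat]_n) : z != 0 ->
  exists w : 'cV[int]_n, exists k : R,
    [/\ 0 < k, w != 0 & intvR R w = k *: map_mx ratr z].
Proof.
move=> Hz.
pose D := \prod_i denq (z i 0).
have HD : 0 < D by apply: prodr_gt0 => i _; exact: denq_gt0.
pose w := \col_i (numq (z i 0) * \prod_(k | k != i) denq (z k 0)).
have Hw : forall i, ((w i 0)%:~R : rat) = z i 0 * D%:~R.
  move=> i; rewrite mxE /D [in RHS](bigD1 i) //= !intrM mulrA -numqE.
  by [].
have HwR : intvR R w = (ratr D%:~R : R) *: map_mx ratr z.
  apply/matrixP => i j; rewrite ord1 [LHS]mxE [RHS]mxE [X in _ * X]mxE.
  by rewrite -(ratr_int R) Hw rmorphM mulrC.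
exists w, (ratr D%:~R); split => //.
- by rewrite ratr_int ltr0z.
- apply: contraNneq Hz => Hw0; apply/eqP/matrixP => i j; rewrite ord1 mxE.
  have := Hw i; rewrite Hw0 mxE /= => /esym/eqP; rewrite mulf_eq0 intr_eq0.
  by rewrite (gt_eqF HD) orbF => /eqP.
Qed.

Section Basic.
Variables (R : realFieldType) (mA mB n : nat) (A : 'M[rat]_(mA,n)) (B : 'M[rat]_(mB,n)).
Local Notation AR := (AR R A).
Local Notation BR := (BR R B).

Lemma pointed_inj (Hp : pointed A B) (y : 'cV[R]_n) :
  AR *m y = 0 -> BR *m y = 0 -> y = 0.
Proof.
move=> Ha Hb.
pose M := col_mx A B.
have HM : map_mx (ratr : rat -> R) M = col_mx AR BR by rewrite map_col_mx.
have Hf : row_free (map_mx (ratr : rat -> R) M)^T.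
  by rewrite /row_free mxrank_tr mxrank_map Hp.
have : y^T *m (map_mx (ratr : rat -> R) M)^T = 0 *m (map_mx (ratr : rat -> R) M)^T.
  by rewrite -trmx_mul HM mul_col_mx Ha Hb col_mx0 trmx0 mul0mx.
move/(row_free_inj Hf)=> /eqP; rewrite trmx_eq0 => /eqP //.
Qed.

Lemma norm1_ge0 m (v : 'cV[R]_m) : 0 <= norm1 v.
Proof. by rewrite /norm1 sumr_ge0. Qed.

Lemma norm1_gt0 (Hp : pointed A B) (y : 'cV[R]_n) :
  y != 0 -> AR *m y = 0 -> 0 < norm1 (BR *m y).
Proof.
move=> Hy Ha; rewrite lt_def norm1_ge0 andbT; apply/eqP => H0.
have H := psumr_eq0P (fun i _ => normr_ge0 ((BR *m y) i 0)) H0.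
move/eqP: Hy; apply; apply: pointed_inj => //.
apply/matrixP => i j; rewrite ord1; have := H i isT.
by move/normr0P/eqP ->; rewrite mxE.
Qed.

End Basic.

Lemma sign_trans (R : realFieldType) (a b c : R) :
  0 <= a * b -> 0 <= b * c -> (b = 0 -> a = 0) -> 0 <= a * c.
Proof.
move=> H1 H2 H3; have [Hb0|Hb] := eqVneq b 0; first by rewrite H3 // mul0r.
have Hb2 : 0 < b * b by rewrite -expr2 exprn_even_gt0.
nra.
Qed.

Lemma step_ineq (R : realFieldType) (t f X Y : R) :
  0 < X * Y -> f * Y = X -> t <= f -> 0 <= X * X - t * X * Y.
Proof.
move=> H1 H2 H3.
have H4 : 0 <= (f - t) * (X * Y) by apply: mulr_ge0; lra.
have H5 : X * X = f * (X * Y) by rewrite -{1}H2; ring.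
nra.
Qed.

Lemma mxDE (R : realFieldType) m k (P Q : 'M[R]_(m, k)) i j :
  (P + Q) i j = P i j + Q i j.
Proof. by rewrite mxE. Qed.
Lemma mxZE (R : realFieldType) m k (a : R) (P : 'M[R]_(m, k)) i j :
  (a *: P) i j = a * P i j.
Proof. by rewrite mxE. Qed.
Lemma mxNE (R : realFieldType) m k (P : 'M[R]_(m, k)) i j :
  (- P) i j = - P i j.
Proof. by rewrite mxE. Qed.

Section Main.
Variables (R : realFieldType) (mA mB n : nat) (A : 'M[rat]_(mA,n)) (B : 'M[rat]_(mB,n)).
Variables (b : 'cV[R]_mA) (d : 'cV[R]_mB) (c : 'cV[R]_n) (x0 u : 'cV[R]_n).
Hypothesis Hp : pointed A B.
Hypothesis Hx0 : in_P A B b d x0.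
Hypothesis Hu : feasible_dir A B b d x0 u.
Variable r : R.
Hypothesis Hr : forall h : 'cV[int]_n, is_circuit R A B h ->
  feasible_dir A B b d x0 (intvR R h) -> r <= obj_ratio B c (intvR R h).

Local Notation AR := (AR R A).
Local Notation BR := (BR R B).
Local Notation U j := ((BR *m u) j 0).

Definition inK (x : 'cV[R]_n) : Prop :=
  AR *m x = 0 /\ forall j, (U j = 0 -> (BR *m x) j 0 = 0) /\ 0 <= (BR *m x) j 0 * U j.

Lemma BRDZ (a v : 'cV[R]_n) (k : R) j :
  (BR *m (a + k *: v)) j 0 = (BR *m a) j 0 + k * (BR *m v) j 0.
Proof. by rewrite mulmxDr -scalemxAr mxDE mxZE. Qed.

Lemma ARDZ (a v : 'cV[R]_n) (k : R) :
  AR *m (a + k *: v) = AR *m a + k *: (AR *m v).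
Proof. by rewrite mulmxDr -scalemxAr. Qed.

Lemma Au0 : AR *m u = 0.
Proof.
case: Hu => beta [Hb [HA _]]; case: Hx0 => HA0 _.
move: HA; rewrite ARDZ HA0 => /eqP; rewrite -subr_eq0 addrC addKr scaler_eq0.
by rewrite (gt_eqF Hb) /= => /eqP.
Qed.

Lemma inK_u : inK u.
Proof. split; first exact: Au0. by move=> j; split => //; rewrite -expr2 sqr_ge0. Qed.

Lemma inK_scale x k : inK x -> 0 <= k -> inK (k *: x).
Proof.
move=> [HA HB] Hk; split; first by rewrite -scalemxAr HA scaler0.
move=> j; have [H1 H2] := HB j; rewrite -scalemxAr mxZE; split.
  by move=> /H1 ->; rewrite mulr0.
by rewrite -mulrA mulr_ge0.
Qed.

Lemma feasible_K v : inK v -> feasible_dir A B b d x0 v.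
Proof.
move=> [HA HB].
case: Hu => beta [Hb [_ Hle]]; case: Hx0 => HA0 Hle0.
pose T := 1 + \sum_j `|(BR *m v) j 0| * `|U j|^-1.
have HT : 1 <= T by rewrite /T lerDl sumr_ge0 // => j _; rewrite mulr_ge0 // invr_ge0.
have HT0 : 0 < T by lra.
exists (beta / T); split; first by rewrite divr_gt0.
split; first by rewrite ARDZ HA scaler0 addr0.
move=> j; rewrite BRDZ.
have := Hle j; rewrite BRDZ => Hj.
have := Hle0 j => Hj0.
have [H1 H2] := HB j.
set p := (BR *m v) j 0 in H1 H2 *.
set q := U j in H1 H2 Hj *.
set a := (BR *m x0) j 0 in Hj Hj0 *.
have [Hp0|Hp0] := lerP p 0.
  have : beta / T * p <= 0 by rewrite mulr_ge0_le0 // ltW // divr_gt0.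
  lra.
have Hq : 0 < q.
  rewrite lt_def; apply/andP; split.
    by apply/eqP => Hq0; move: (H1 Hq0); lra.
  by move: H2; rewrite pmulr_rge0.
have Hterm : p / q <= T.
  rewrite /T (bigD1 j) //= gtr0_norm // gtr0_norm // addrA -/p -/q.
  have : 0 <= \sum_(i | i != j) `|(BR *m v) i 0| * `|U i|^-1.
    by rewrite sumr_ge0 // => i _; rewrite mulr_ge0 // invr_ge0.
  lra.
have : beta / T * p <= beta * q.
  rewrite mulrAC ler_pdivrMr // -mulrA ler_pM2l //.
  by move: Hterm; rewrite ler_pdivrMr // mulrC.
lra.
Qed.

Definition L (v : 'cV[R]_n) : R :=
  dotc c v - r * \sum_j Num.sg (U j) * (BR *m v) j 0.

Lemma L_lin a v k : L (a + k *: v) = L a + k * L v.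
Proof.
rewrite /L /dotc.
have -> : \sum_i c i 0 * (a + k *: v) i 0 = \sum_i c i 0 * a i 0 + k * \sum_i c i 0 * v i 0.
  by rewrite mulr_sumr -big_split; apply: eq_bigr => i _ /=; rewrite mxDE mxZE; ring.
have -> : \sum_j Num.sg (U j) * (BR *m (a + k *: v)) j 0 =
  \sum_j Num.sg (U j) * (BR *m a) j 0 + k * \sum_j Num.sg (U j) * (BR *m v) j 0.
  by rewrite mulr_sumr -big_split; apply: eq_bigr => i _ /=; rewrite BRDZ; ring.
ring.
Qed.

Lemma L0 : L 0 = 0.
Proof. by have := L_lin 0 0 1; rewrite scale1r addr0 mul1r; lra. Qed.

Lemma L_scale k v : L (k *: v) = k * L v.
Proof. by rewrite -(add0r (k *: v)) L_lin L0 add0r. Qed.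

Lemma sum_sg v : inK v -> \sum_j Num.sg (U j) * (BR *m v) j 0 = norm1 (BR *m v).
Proof.
move=> [_ HB]; apply: eq_bigr => j _; have [H1 H2] := HB j.
have [Hq|Hq|Hq] := ltrgt0P (U j).
- rewrite gtr0_sg // mul1r ger0_norm //.
  by move: H2; rewrite pmulr_lge0.
- rewrite ltr0_sg // mulN1r ler0_norm //.
  by move: H2; rewrite mulrC nmulr_rge0.
- by rewrite H1 // normr0 mulr0.
Qed.

Lemma step x y j0 : inK x -> AR *m y = 0 ->
  (forall j, (BR *m x) j 0 = 0 -> (BR *m y) j 0 = 0) ->
  0 < (BR *m x) j0 0 * (BR *m y) j0 0 ->
  exists q t, [/\ 0 < t, x = q + t *: y, inK q &
                  (#|supp (BR *m q)| < #|supp (BR *m x)|)%N].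
Proof.
move=> [HAx HBx] HAy Hsub Hj0.
pose X j := (BR *m x) j 0. pose Y j := (BR *m y) j 0.
pose P := [pred j | 0 < X j * Y j]. pose F j := X j / Y j.
case: (@arg_minP _ R 'I_mB j0 P F Hj0) => jm Pjm Hmin.
pose t := F jm.
have HY : forall j, P j -> Y j != 0.
  by move=> j; rewrite inE; apply: contraTneq => ->; rewrite mulr0 ltxx.
have HF : forall j, P j -> F j * Y j = X j by move=> j Pj; rewrite /F divfK // HY.
have Htgt : 0 < t.
  have H1 := HF jm Pjm; have H2 : 0 < Y jm * Y jm by rewrite -expr2 exprn_even_gt0 // HY.
  move: Pjm; rewrite inE => H3; rewrite /t; nra.
pose q := x + (-t) *: y.
have Hq : forall j, (BR *m q) j 0 = X j + - t * Y j by move=> j; rewrite BRDZ.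
have HQ : forall j, 0 <= (BR *m q) j 0 * X j /\ (X j = 0 -> (BR *m q) j 0 = 0).
  move=> j; rewrite Hq.
  have [HX0|HX0] := eqVneq (X j) 0.
    by rewrite HX0 /Y (Hsub _ HX0) !(mulr0, addr0, mul0r); split.
  split; last by move=> H; move: HX0; rewrite H eqxx.
  have -> : (X j + - t * Y j) * X j = X j * X j - t * (X j * Y j) by ring.
  case: (boolP (P j)) => Pj.
    by have := step_ineq Pj (HF j Pj) (Hmin j Pj); rewrite mulrA.
  move: Pj; rewrite inE -leNgt => Pj.
  have : 0 <= X j * X j by rewrite -expr2 sqr_ge0.
  have : t * (X j * Y j) <= 0 by rewrite mulr_ge0_le0 // ltW.
  lra.
exists q, t; split => //.
- by rewrite /q -addrA scaleNr addNr addr0.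
- split; first by rewrite ARDZ HAx HAy scaler0 addr0.
  move=> j; have [H1 H2] := HBx j; have [H3 H4] := HQ j; split.
    by move=> /H1 /H4.
  exact: (sign_trans H3 H2 H4).
- apply: proper_card; apply/properP; split.
    apply/subsetP => j; rewrite !inE; apply: contra => /eqP HX0.
    by have [_ H4] := HQ j; rewrite (H4 HX0).
  exists jm; rewrite !inE.
    by apply/eqP => HX0; move: Pjm; rewrite inE /X HX0 mul0r ltxx.
  by rewrite Hq -(HF jm Pjm) -/t mulNr addrN eqxx.
Qed.

Lemma base x : inK x -> x != 0 ->
  ~ (exists y, [/\ AR *m y = 0, y != 0 & supp (BR *m y) \proper supp (BR *m x)]) ->
  0 <= L x.
Proof.
move=> HK Hx Hmin; have HAx := HK.1.
pose S := supp (BR *m x).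
pose N : 'M[rat]_(mB, n) := \matrix_(i, j) (if i \in S then 0 else B i j).
pose M := col_mx A N.
have HMR : forall z : 'cV[R]_n, map_mx ratr M *m z = 0 <->
    AR *m z = 0 /\ (forall i, i \notin S -> (BR *m z) i 0 = 0).
  move=> z; rewrite map_col_mx mul_col_mx.
  have HN : map_mx ratr N *m z = \col_i (if i \in S then 0 else (BR *m z) i 0).
    apply/matrixP => i j; rewrite ord1 [RHS]mxE; case: ifP => HiS.
      by rewrite mxE big1 // => k _; rewrite !mxE HiS rmorph0 mul0r.
    by rewrite !mxE; apply: eq_bigr => k _; rewrite !mxE HiS.
  rewrite HN; split.
    move/eqP; rewrite col_mx_eq0 => /andP [/eqP H1 /eqP H2]; split => // i Hi.
    by have := congr1 (fun Q : 'cV[R]_mB => Q i 0) H2; rewrite !mxE (negbTE Hi).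
  move=> [H1 H2]; apply/eqP; rewrite col_mx_eq0 H1 eqxx /=; apply/eqP/matrixP => i j.
  by rewrite ord1 [LHS]mxE [RHS]mxE; case: ifP => // /negbT /H2.
have HMx : map_mx ratr M *m x = 0.
  by apply/HMR; split => // i; rewrite inE negbK => /eqP.
have [z [Hz0 HMz]] := rational_kernel Hx HMx.
have [w [k [Hk Hw0 Hwz]]] := int_vec R Hz0.
have [h [G [HG Hwh Hgcd]]] := primitive Hw0.
pose zR := map_mx (ratr : rat -> R) z.
have HzR : map_mx ratr M *m zR = 0 by rewrite -map_mxM HMz map_mx0.
have [HAz HBz] := (HMR zR).1 HzR.
have [mu Hmu] : exists mu, zR = mu *: x.
  have HBx : BR *m x != 0 by apply: contra Hx => /eqP H; apply/eqP; exact: (pointed_inj Hp HAx H).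
  have [j Hj] : exists j, (BR *m x) j 0 != 0.
    apply/existsP; move: HBx; apply: contraR; rewrite negb_exists => /forallP H.
    apply/eqP/matrixP => i l; rewrite ord1 [RHS]mxE; exact/eqP/negPn/H.
  pose mu := (BR *m zR) j 0 / (BR *m x) j 0.
  pose y := zR + (- mu) *: x.
  have [Hy|Hy] := eqVneq y 0.
    exists mu; have := congr1 (fun v => v + mu *: x) Hy.
    by rewrite /y scaleNr addrNK add0r.
  exfalso; apply: Hmin; exists y; split => //.
    by rewrite ARDZ HAz HAx scaler0 addr0.
  apply/properP; split.
    apply/subsetP => i; apply: contraTT => HiS.
    rewrite inE negbK BRDZ HBz //; move: HiS; rewrite inE negbK => /eqP ->.
    by rewrite mulr0 addr0.
  exists j; first by rewrite inE.
  by rewrite inE negbK BRDZ /mu mulNr divfK // addrN.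
have Hmu0 : mu != 0.
  apply: contraNneq Hz0 => H0; move: Hmu; rewrite H0 scale0r => /eqP.
  by rewrite /zR map_mx_eq0.
have HvR : intvR R w = G%:~R *: intvR R h.
  by apply/matrixP => i j; rewrite ord1 !mxE Hwh intrM.
pose lam0 := (k * mu)^-1 * G%:~R.
have Hx0' : x = lam0 *: intvR R h.
  rewrite /lam0 -scalerA -HvR Hwz -/zR Hmu scalerA scalerA.
  by rewrite mulVf ?scale1r // mulf_neq0 // gt_eqF.
have Hlam0 : lam0 != 0.
  rewrite /lam0 mulf_neq0 //; first by rewrite invr_eq0 mulf_neq0 // gt_eqF.
  by rewrite intr_eq0 gt_eqF.
have [h' [lam [Hlam Hxh Hgcd']]] : exists h' : 'cV[int]_n, exists lam : R,
    [/\ 0 < lam, x = lam *: intvR R h' & \big[gcdz/0]_(i < n) h' i 0 = 1].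
  have [Hl|Hl|Hl] := ltrgt0P lam0.
  - by exists h, lam0.
  - exists (- h), (- lam0); split.
    + by rewrite oppr_gt0.
    + rewrite Hx0'; have -> : intvR R (- h) = - intvR R h.
        by apply/matrixP => i j; rewrite !mxE intrN.
      by rewrite scaleNr scalerN opprK.
    + rewrite big_gcdz -Hgcd big_gcdz; congr Posz; apply: eq_bigr => i _.
      by rewrite mxE abszN.
  - by move: Hlam0; rewrite Hl eqxx.
pose v := intvR R h'.
have Hv : v = lam^-1 *: x by rewrite Hxh scalerA mulVf ?scale1r // gt_eqF.
have HKv : inK v by rewrite Hv; apply: inK_scale => //; rewrite invr_ge0 ltW.
have Hv0 : v != 0 by rewrite Hv scaler_eq0 negb_or invr_eq0 gt_eqF.
have Hcirc : is_circuit R A B h'.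
  split => //.
  - apply: contraNneq Hv0 => H0; rewrite /v H0; apply/eqP/matrixP => i j.
    by rewrite !mxE.
  - exact: HKv.1.
  - move=> [y [Hy1 Hy2 Hy3]]; apply: Hmin; exists y; split => //.
    suff <- : supp (BR *m v) = supp (BR *m x) by [].
    apply/setP => i; rewrite !inE Hv -scalemxAr mxZE mulf_eq0 negb_or.
    by rewrite invr_eq0 gt_eqF.
have := Hr Hcirc (feasible_K HKv); rewrite -/v /obj_ratio.
have HN0 := norm1_gt0 Hp Hv0 HKv.1.
rewrite ler_pdivlMr // => Hrv.
have HLv : 0 <= L v by rewrite /L sum_sg //; lra.
by rewrite Hxh L_scale mulr_ge0 // ltW.
Qed.

Lemma main_ind : forall x, inK x -> 0 <= L x.
Proof.
have H : forall k x, #|supp (BR *m x)| = k -> inK x -> 0 <= L x.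
  elim/ltn_ind => k IH x Hk HK.
  have [->|Hx] := eqVneq x 0; first by rewrite L0.
  case: (Classical_Prop.classic (exists y, [/\ AR *m y = 0, y != 0 &
            supp (BR *m y) \proper supp (BR *m x)])); last exact: base.
  move=> [y [Hy1 Hy2 Hy3]].
  have IHc : forall y', AR *m y' = 0 -> supp (BR *m y') \proper supp (BR *m x) ->
      (exists j0, 0 < (BR *m x) j0 0 * (BR *m y') j0 0) -> 0 <= L x.
    move=> y' Ha Hpr [j0 Hj0].
    have Hsub' : forall j, (BR *m x) j 0 = 0 -> (BR *m y') j 0 = 0.
      move=> j Hj; move/properP: Hpr => [/subsetP Hs _].
      apply/eqP; apply: contraT => Hyj; have := Hs j; rewrite !inE Hyj Hj eqxx.
      by move=> /(_ isT).
    have [q [t [Ht Hxq HKq Hcq]]] := step HK Ha Hsub' Hj0.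
    have HLq : 0 <= L q by apply: (IH _ _ q erefl HKq); rewrite -Hk.
    case: (boolP [exists j1, (BR *m x) j1 0 * (BR *m y') j1 0 < 0]).
    - move/existsP => [j1 Hj1].
      have Ha' : AR *m (- y') = 0 by rewrite mulmxN Ha oppr0.
      have Hsub'' : forall j, (BR *m x) j 0 = 0 -> (BR *m - y') j 0 = 0.
        by move=> j /Hsub' H; rewrite mulmxN mxNE H oppr0.
      have Hj1' : 0 < (BR *m x) j1 0 * (BR *m - y') j1 0.
        by rewrite mulmxN mxNE mulrN oppr_gt0.
      have [p [s [Hs Hxp HKp Hcp]]] := step HK Ha' Hsub'' Hj1'.
      have HLp : 0 <= L p by apply: (IH _ _ p erefl HKp); rewrite -Hk.
      have E1 : L x = L q + t * L y' by rewrite {1}Hxq L_lin.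
      have E2 : L x = L p - s * L y' by rewrite {1}Hxp scalerN -scaleNr L_lin mulNr.
      have E : (s + t) * L x = s * L q + t * L p.
        by rewrite mulrDl {1}E1 E2; ring.
      have : 0 <= (s + t) * L x by rewrite E addr_ge0 // mulr_ge0 // ltW.
      by rewrite pmulr_rge0 // addr_gt0.
    - rewrite negb_exists => /forallP Hn.
      have HKy : inK y'.
        split => // j'; have [H1 H2] := HK.2 j'; split.
          by move=> /H1 /Hsub'.
        apply: (sign_trans _ H2 (Hsub' j')).
        by move: (Hn j'); rewrite -leNgt mulrC.
      have HLy : 0 <= L y'.
        by apply: (IH _ _ y' erefl HKy); rewrite -Hk; exact: proper_card.
      by rewrite Hxq L_lin addr_ge0 // mulr_ge0 // ltW.
  have HBy : BR *m y != 0.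
    by apply: contra Hy2 => /eqP H; apply/eqP; exact: (pointed_inj Hp Hy1 H).
  have [j Hj] : exists j, (BR *m y) j 0 != 0.
    apply/existsP; move: HBy; apply: contraR; rewrite negb_exists => /forallP H.
    apply/eqP/matrixP => i l; rewrite ord1 [RHS]mxE; exact/eqP/negPn/H.
  have Hxj : (BR *m x) j 0 != 0.
    move/properP: Hy3 => [/subsetP Hs _]; have := Hs j; rewrite !inE Hj.
    by move=> /(_ isT).
  have [Hl|Hl|Hl] := ltrgt0P ((BR *m x) j 0 * (BR *m y) j 0).
  - by apply: (IHc y) => //; exists j.
  - apply: (IHc (- y)); first by rewrite mulmxN Hy1 oppr0.
      have -> : supp (BR *m - y) = supp (BR *m y).
        by apply/setP => i; rewrite !inE mulmxN mxNE oppr_eq0.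
      by [].
    by exists j; rewrite mulmxN mxNE mulrN oppr_gt0.
  - by move: Hl => /eqP; rewrite mulf_eq0 (negbTE Hj) (negbTE Hxj).
by move=> x HK; apply: (H _ x erefl HK).
Qed.

End Main.

Theorem lemma2 (R : realFieldType) (mA mB n : nat)
  (A : 'M[rat]_(mA, n)) (B : 'M[rat]_(mB, n))
  (b : 'cV[R]_mA) (d : 'cV[R]_mB) (c : 'cV[R]_n) (x0 : 'cV[R]_n) :
  pointed A B ->
  in_P A B b d x0 ->
  forall g : 'cV[R]_n,
    steepest_descent_circuit_direction A B b d c x0 g ->
    forall u : 'cV[R]_n, u != 0 -> feasible_dir A B b d x0 u ->
      @obj_ratio R mB n B c g <= @obj_ratio R mB n B c u.
Proof.
move=> Hp Hx0 g [g0 [lam [[Hc Hf Hmin] Hlam ->]]] u Hu0 Hu.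
pose r := obj_ratio B c (intvR R g0).
have Hr : forall h, is_circuit R A B h -> feasible_dir A B b d x0 (intvR R h) ->
    r <= obj_ratio B c (intvR R h) by move=> h H1 H2; exact: Hmin.
have Hscale : obj_ratio B c (lam *: intvR R g0) = r.
  rewrite /r /obj_ratio /dotc /norm1 -scalemxAr.
  have -> : \sum_i c i 0 * (lam *: intvR R g0) i 0 = lam * \sum_i c i 0 * intvR R g0 i 0.
    by rewrite mulr_sumr; apply: eq_bigr => i _; rewrite mxZE mulrCA.
  have -> : \sum_i `|(lam *: (BR R B *m intvR R g0)) i 0| =
            lam * \sum_i `|(BR R B *m intvR R g0) i 0|.
    by rewrite mulr_sumr; apply: eq_bigr => i _; rewrite mxZE normrM gtr0_norm.
  by rewrite invfM mulrACA divff ?mul1r // gt_eqF.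
rewrite Hscale.
have HKu := inK_u Hx0 Hu.
have HL := main_ind Hp Hx0 Hu Hr HKu.
move: HL; rewrite /L (sum_sg HKu) /obj_ratio.
have HN := norm1_gt0 Hp Hu0 (Au0 Hx0 Hu).
rewrite ler_pdivlMr //; lra.
Qed.
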